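(* Let $n\ge4$ be even, $1\le i\le n-1$, $y\in Y_i$ and $s\in\{s_1,\dots,s_{n-1}\}$ with $sys\notin Y_i$. (a) If $i=1$ then $s=s_2$. (b) If $2\le i\le n-2$ then $s\in\{s_1,s_i,s_{i+1}\}$. (c) If $i=n-1$ then $s\in\{s_1,s_{n-1}\}$.
   Context: $s_i=(i,i+1)$; permutations compose right to left. $\mathcal F_m$ is the set of fixed-point-free involutions in $S_m$. Regard $\mathcal F_{n-2}\subset S_n$; $w_0$ longest element of $S_n$; $Y_1=\{w_0zs_{n-1}w_0:z\in\mathcal F_{n-2}\}$; $\sigma_i=s_is_{i-1}\cdots s_1$; $Y_i=\sigma_iY_1\sigma_i^{-1}$. *)

(* Defs.v *)
From HB Require Import structures.
From mathcomp Require Import all_boot all_fingroup.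
Set Implicit Arguments. Unset Strict Implicit. Unset Printing Implicit Defensive.

(* Permutations of {1,...,n} are modelled as {perm 'I_n}; the paper's point
   k (1 <= k <= n) is the ordinal k-1.  MathComp's product satisfies
   (a * b) x = b (a x), so the paper's right-to-left composition a b
   (apply b first) is [rl a b] := b * a. *)
Local Open Scope group_scope.

Definition rl n (a b : {perm 'I_n}) : {perm 'I_n} := b * a.

(* s_i = (i, i+1) in paper's 1-indexed notation = tperm (i-1) i on 'I_n.
   (Identity when i is out of range; only used for 1 <= i <= n-1.) *)
Definition sgen n (i : nat) : {perm 'I_n} :=
  match insub i.-1 : option 'I_n, insub i : option 'I_n with
  | Some a, Some b => tperm a b
  | _, _ => 1
  end.

Definition w0 n : {perm 'I_n} := perm (@rev_ord_inj n).

(* F_{n-2} regarded in S_n: involutions fixing exactly the points n-1, n *)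
Definition Fset n : {set {perm 'I_n}} :=
  [set z : {perm 'I_n} | (z * z == 1) && [forall x : 'I_n, (z x == x) == (n - 2 <= x)%N]].

Definition Y1 n : {set {perm 'I_n}} :=
  [set rl (w0 n) (rl z (rl (sgen n n.-1) (w0 n))) | z in Fset n].

Fixpoint sigma n (i : nat) : {perm 'I_n} :=
  match i with
  | 0 => 1
  | k.+1 => rl (sgen n k.+1) (sigma n k)
  end.

Definition Y n (i : nat) : {set {perm 'I_n}} :=
  [set rl (sigma n i) (rl y (sigma n i)^-1) | y in Y1 n].

(* Main.v *)
Require Import Defs.
From mathcomp Require Import all_boot all_fingroup.
From mathcomp Require Import zify.
Set Implicit Arguments. Unset Strict Implicit.
Local Open Scope group_scope.

Lemma sgenE n k (a b : 'I_n) : val a = k.-1 -> val b = k -> sgen n k = tperm a b.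
Proof.
move=> ha hb; rewrite /sgen.
have -> : insub k.-1 = Some a by rewrite -ha valK.
have -> : insub k = Some b by rewrite -hb valK.
by [].
Qed.

Lemma sigma0 n k (x : 'I_n) : (k < n)%N -> val x = 0%N -> val (sigma n k x) = k.
Proof.
elim: k => [|k IH] hk hx /=; first by rewrite perm1.
rewrite /rl permM.
have hk' : (k < n)%N by lia.
rewrite (@sgenE n k.+1 (Ordinal hk') (Ordinal hk)) //.
have -> : sigma n k x = Ordinal hk' by apply: val_inj; rewrite /= IH.
by rewrite tpermL.
Qed.

Lemma sigma1 n k (x : 'I_n) : (0 < k < n)%N -> val x = 1%N -> val (sigma n k x) = 0%N.
Proof.
elim: k => [|k IH] hk hx //=.
rewrite /rl permM.
have hk' : (k < n)%N by lia.
have hkn : (k.+1 < n)%N by lia.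
rewrite (@sgenE n k.+1 (Ordinal hk') (Ordinal hkn)) //.
case: k IH hk hk' hkn => [|k] IH hk hk' hkn.
  have -> : sigma n 0 x = Ordinal hkn by apply: val_inj; rewrite /= perm1 hx.
  by rewrite tpermR.
rewrite tpermD.
- by rewrite IH //; lia.
- by apply/eqP => /(congr1 val) /=; rewrite IH //; lia.
- by apply/eqP => /(congr1 val) /=; rewrite IH //; lia.
Qed.
Section Main.
Variables (n i : nat).
Hypothesis hn : (4 <= n)%N.
Hypothesis hi : (0 < i < n)%N.
Let h0 : (0 < n)%N. Proof. lia. Qed.
Let h1 : (1 < n)%N. Proof. lia. Qed.
Let hi' : (i < n)%N. Proof. lia. Qed.
Let ha : (n.-2 < n)%N. Proof. lia. Qed.
Let hb : (n.-1 < n)%N. Proof. lia. Qed.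
Let o0 : 'I_n := Ordinal h0.
Let o1 : 'I_n := Ordinal h1.
Let oi : 'I_n := Ordinal hi'.
Let oa : 'I_n := Ordinal ha.
Let ob : 'I_n := Ordinal hb.
Let sg := sigma n i.

Let sg0 : sg o0 = oi. Proof. by apply: val_inj; rewrite /= sigma0. Qed.
Let sg1 : sg o1 = o0. Proof. by apply: val_inj; rewrite /= sigma1. Qed.
Let sgV0 : sg^-1 o0 = o1. Proof. by rewrite -sg1 permK. Qed.
Let sgVi : sg^-1 oi = o0. Proof. by rewrite -sg0 permK. Qed.
Let w0K x : w0 n (w0 n x) = x.
Proof. by rewrite /w0 !permE rev_ordK. Qed.
Let w01 : w0 n o1 = oa. Proof. apply: val_inj; rewrite /w0 permE /=; lia. Qed.
Let w00 : w0 n o0 = ob. Proof. apply: val_inj; rewrite /w0 permE /=; lia. Qed.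
Let w0a : w0 n oa = o1. Proof. by rewrite -w01 w0K. Qed.
Let w0b : w0 n ob = o0. Proof. by rewrite -w00 w0K. Qed.
Let sE : sgen n n.-1 = tperm oa ob. Proof. by apply: sgenE. Qed.
Let geE (u : 'I_n) : (n - 2 <= u)%N = (u == oa) || (u == ob).
Proof.
apply/idP/orP.
  move=> h; have := ltn_ord u; case: (ltnP u n.-1) => h2 h3.
    by left; apply/eqP/val_inj => /=; lia.
  by right; apply/eqP/val_inj => /=; lia.
by case=> /eqP -> /=; lia.
Qed.

Lemma Yfacts y : y \in Y n i -> y o0 = oi /\ y oi = o0.
Proof.
move=> /imsetP [y1 /imsetP [z hz ->] ->].
move: hz; rewrite inE => /andP [_ /forallP hz].
have za : z oa = oa by apply/eqP; rewrite (eqP (hz oa)) geE eqxx.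
have zb : z ob = ob by apply/eqP; rewrite (eqP (hz ob)) geE eqxx orbT.
rewrite /rl !permM -/sg sgV0 sgVi w01 w00 sE tpermL tpermR za zb w0a w0b.
by rewrite sg0 sg1.
Qed.

Lemma conjY (y p : {perm 'I_n}) : y \in Y n i -> (forall x : 'I_n, val x = 0%N -> p x = x) ->
  (forall x : 'I_n, val x = i -> p x = x) -> p^-1 * y * p \in Y n i.
Proof.
move=> /imsetP [y1 /imsetP [z hz ->] ->] hp0 hpi.
have p0 : p o0 = o0 by apply: hp0.
have pi : p oi = oi by apply: hpi.
pose r := w0 n * (sg * p * sg^-1) * w0 n.
have rE u : r u = w0 n (sg^-1 (p (sg (w0 n u)))) by rewrite /r !permM.
have rVE u : r^-1 u = w0 n (sg^-1 (p^-1 (sg (w0 n u)))).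
  apply: (@perm_inj _ r); by rewrite permKV rE w0K !permKV permK w0K.
have ra : r oa = oa by rewrite rE w0a sg1 p0 sgV0 w01.
have rb : r ob = ob by rewrite rE w0b sg0 pi sgVi w00.
have rVa : r^-1 oa = oa by rewrite -{1}ra permK.
have rVb : r^-1 ob = ob by rewrite -{1}rb permK.
have com u : r^-1 (tperm oa ob u) = tperm oa ob (r^-1 u).
  have := tpermJ oa ob (r^-1); rewrite rVa rVb => /permP /(_ (r^-1 u)).
  by rewrite permJ.
move: hz; rewrite inE => /andP [/eqP zz /forallP hz].
have zzE u : z (z u) = u by rewrite -permM zz perm1.
clearbody r.
pose z' := r^-1 * z * r.
apply/imsetP; exists (rl (w0 n) (rl z' (rl (sgen n n.-1) (w0 n)))).
  apply/imsetP; exists z' => //.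
  rewrite inE; apply/andP; split.
    apply/eqP/permP => u; rewrite /z' !permM perm1 permK zzE; exact: permKV.
  apply/forallP => u.
  rewrite /z' !permM -{2}(permKV r u) (inj_eq (@perm_inj _ r)) (eqP (hz _)).
  have e1 : (r^-1 u == oa) = (u == oa) by rewrite -{1}rVa (inj_eq (@perm_inj _ r^-1)).
  have e2 : (r^-1 u == ob) = (u == ob) by rewrite -{1}rVb (inj_eq (@perm_inj _ r^-1)).
  by rewrite !geE e1 e2.
apply/permP => x; rewrite /rl /z' !permM -/sg sE com rVE w0K permKV.
by rewrite rE w0K permKV.
Qed.

End Main.

Theorem proposition3p8 (n : nat) (hn : (4 <= n)%N) (hev : ~~ odd n)
  (i : nat) (hi : (1 <= i <= n - 1)%N)
  (y : {perm 'I_n}) (hy : y \in Y n i)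
  (j : nat) (hj : (1 <= j <= n - 1)%N)
  (hs : rl (sgen n j) (rl y (sgen n j)) \notin Y n i) :
  [/\ i = 1%N -> sgen n j = sgen n 2,
      (2 <= i <= n - 2)%N ->
        sgen n j \in [:: sgen n 1; sgen n i; sgen n i.+1]
    & i = (n - 1)%N -> sgen n j \in [:: sgen n 1; sgen n (n - 1)]].
Proof.
have hi' : (0 < i < n)%N by lia.
have hja : (j.-1 < n)%N by lia.
have hjb : (j < n)%N by lia.
have sE := @sgenE n j (Ordinal hja) (Ordinal hjb) erefl erefl.
have key : j = 1%N \/ j = i \/ j = i.+1.
  case: (j =P 1%N) => [->|h1]; first by left.
  case: (j =P i) => [->|h2]; first by right; left.
  case: (j =P i.+1) => [->|h3]; first by right; right.
  exfalso; move/negP: hs; apply.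
  have := @conjY n i hn hi' y (sgen n j) hy.
  rewrite /rl sE tpermV; apply.
    move=> x hx; apply: tpermD; apply/eqP => /(congr1 val) /=; move: hx => /= hx; lia.
  move=> x hx; apply: tpermD; apply/eqP => /(congr1 val) /=; move: hx => /= hx; lia.
split.
- move=> e; subst i.
  have [ej|ej] : j = 1%N \/ j = 2 by case: key => [|[|]] ->; auto.
    2: by rewrite ej.
  exfalso; move/negP: hs; apply.
  have [y0 yi] := Yfacts hn hi' hy.
  set a := Ordinal _ in y0 yi; set b := Ordinal _ in y0 yi.
  have ea : Ordinal hja = a by apply: val_inj; rewrite /= ej.
  have eb : Ordinal hjb = b by apply: val_inj; rewrite /= ej.
  suff -> : rl (sgen n j) (rl y (sgen n j)) = y by [].
  rewrite sE ea eb; apply/permP => x; rewrite /rl !permM.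
  case: (tpermP a b x) => [->|->|xa xb]; rewrite ?y0 ?yi ?tpermL ?tpermR //.
  rewrite tpermD //.
    by apply/eqP => h; apply: xb; apply: (@perm_inj _ y); rewrite -h yi.
  by apply/eqP => h; apply: xa; apply: (@perm_inj _ y); rewrite -h y0.
- move=> _; rewrite !inE.
  by case: key => [->|[->|->]]; rewrite eqxx ?orbT.
- move=> e; rewrite !inE.
  case: key => [->|[->|ej]]; rewrite ?e ?eqxx ?orbT //.
  lia.
Qed.
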